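(* Let $G$ be a finite simple graph on $n\ge 2$ vertices. Then $\alpha(G)=2$ if and only if $\alpha_q(G)=2$.
   Context: $\alpha(G)$ denotes the independence number of $G$. For a finite simple graph $X$ and positive integers $s,d$, a quantum $s$-coclique matrix (in dimension $d$) is a $|V(X)|\times s$ array $P=(P_{vi})_{v\in V(X),\, i\in[s]}$ of orthogonal projections $P_{vi}\in\mathbb{C}^{d\times d}$ such that (a) $\sum_{v\in V(X)}P_{vi}=I_d$ for every $i\in[s]$; (b) $P_{vi}P_{uj}=0$ for all $i\neq j$ in $[s]$ and all adjacent vertices $u\sim v$; (c) $P_{vi}P_{vj}=0$ for all $v\in V(X)$ and all $i\neq j$ in $[s]$. The quantum independence number $\alpha_q(X)$ is the largest $s$ such that a quantum $s$-coclique matrix for $X$ exists for some $d\ge 1$. *)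

(* Defs.v *)
From HB Require Import structures.
From mathcomp Require Import all_boot all_order all_algebra.
From mathcomp Require Import complex.
From mathcomp Require Import Rstruct.
Set Implicit Arguments. Unset Strict Implicit. Unset Printing Implicit Defensive.
Import Order.TTheory GRing.Theory Num.Theory.
Local Open Scope ring_scope.

Definition CC : numClosedFieldType := (Rdefinitions.R)[i].

Definition adjmx (d : nat) (A : 'M[CC]_d) : 'M[CC]_d := map_mx Num.conj (A^T).

Definition is_orth_proj (d : nat) (P : 'M[CC]_d) : Prop :=
  P *m P = P /\ adjmx P = P.

Definition simple_graph (T : finType) (e : rel T) : Prop :=
  symmetric e /\ irreflexive e.

Definition independent (T : finType) (e : rel T) (A : {set T}) : bool :=
  [forall x in A, forall y in A, ~~ e x y].

Definition alpha (T : finType) (e : rel T) : nat :=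
  \max_(A : {set T} | independent e A) #|A|.

Definition quantum_coclique (T : finType) (e : rel T) (s d : nat)
    (P : T -> 'I_s -> 'M[CC]_d) : Prop :=
  [/\ (forall v i, is_orth_proj (P v i)),
      (forall i, \sum_(v : T) P v i = 1%:M),
      (forall (i j : 'I_s) (u v : T), i != j -> e u v -> P v i *m P u j = 0)
    & (forall (v : T) (i j : 'I_s), i != j -> P v i *m P v j = 0)].

Definition has_quantum_coclique (T : finType) (e : rel T) (s : nat) : Prop :=
  exists d : nat, (1 <= d)%N /\ exists P : T -> 'I_s -> 'M[CC]_d,
    @quantum_coclique T e s d P.

(* alpha_q(X) = k : k is the largest positive s admitting a quantum
   s-coclique matrix (in some dimension d >= 1). *)
Definition alpha_q_eq (T : finType) (e : rel T) (k : nat) : Prop :=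
  [/\ (1 <= k)%N, has_quantum_coclique e k &
      forall s : nat, (k < s)%N -> ~ has_quantum_coclique e s].

(* Main.v *)
Require Import Defs.
From mathcomp Require Import all_boot all_order all_algebra.
From mathcomp Require Import complex.
Set Implicit Arguments. Unset Strict Implicit. Unset Printing Implicit Defensive.
Import Order.TTheory GRing.Theory Num.Theory.
Local Open Scope ring_scope.

Section Aux.
Variables (T : finType) (e : rel T).

Lemma one_neq0 (d : nat) : (0 < d)%N -> (1%:M : 'M[CC]_d) != 0.
Proof.
move=> d0; apply/negP => /eqP/matrixP/(_ (Ordinal d0) (Ordinal d0)).
rewrite !mxE eqxx /= => H; apply: (negP (oner_neq0 CC)); apply/eqP; exact: H.
Qed.

Lemma classical_q s (a : 'I_s -> T) : injective a ->
  (forall i j, i != j -> ~~ e (a i) (a j)) -> has_quantum_coclique e s.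
Proof.
move=> inj ind; exists 1%N; split=> //.
exists (fun v i => if v == a i then 1%:M else 0); split.
- move=> v i; case: ifP => _; split; rewrite ?mul1mx ?mul0mx //;
  apply/matrixP => p q; rewrite !mxE //= ?rmorph0 //.
  by rewrite conjC_nat eq_sym.
- move=> i; rewrite (bigD1 (a i)) //= eqxx.
  rewrite [X in _ + X](_ : _ = (0 : 'M[CC]_1)) ?addr0 //; apply: big1 => v /negbTE -> //.
- move=> i j u v ij euv.
  case: (eqVneq v (a i)) => [Hv|_]; last by rewrite mul0mx.
  case: (eqVneq u (a j)) => [Hu|_]; last by rewrite mulmx0.
  by move: (ind j i); rewrite eq_sym ij -Hu -Hv euv => /(_ isT).
- move=> v i j ij.
  case: (eqVneq v (a i)) => [Hv|_]; last by rewrite mul0mx.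
  case: (eqVneq v (a j)) => [Hv'|_]; last by rewrite mulmx0.
  by move: ij; rewrite (inj _ _ (etrans (esym Hv) Hv')) eqxx.
Qed.

Lemma classical_set (A : {set T}) : independent e A ->
  has_quantum_coclique e #|A|.
Proof.
move=> IA; apply: (@classical_q _ (@enum_val T (mem A))).
  exact: enum_val_inj.
move=> i j _; move/forallP: IA => /(_ (enum_val i)) /implyP /(_ (enum_valP i)).
by move/forallP => /(_ (enum_val j)) /implyP /(_ (enum_valP j)).
Qed.

Hypothesis sym : symmetric e.
Hypothesis irr : irreflexive e.

Lemma big3 x y z : x != y -> x != z -> y != z -> ~~ e x y -> ~~ e x z ->
  ~~ e y z -> (3 <= alpha e)%N.
Proof.
move=> nxy nxz nyz /negbTE exy /negbTE exz /negbTE eyz.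
have I : independent e (x |: [set y; z]).
  apply/forallP => p; apply/implyP => Hp; apply/forallP => q; apply/implyP => Hq.
  move: Hp Hq; rewrite !inE => /orP[|/orP[]]/eqP-> /orP[|/orP[]]/eqP->;
  by rewrite ?irr ?(sym y x) ?(sym z x) ?(sym z y) ?exy ?exz ?eyz.
have := @leq_bigmax_cond _ (independent e) (fun A : {set T} => #|A|) _ I.
rewrite cardsU1 cards2 nyz !inE negb_or nxy nxz.
done.
Qed.

Lemma big2 x y : x != y -> ~~ e x y -> (2 <= alpha e)%N.
Proof.
move=> nxy /negbTE exy.
have I : independent e [set x; y].
  apply/forallP => p; apply/implyP => Hp; apply/forallP => q; apply/implyP => Hq.
  move: Hp Hq; rewrite !inE => /orP[]/eqP-> /orP[]/eqP->;
  by rewrite ?irr ?(sym y x) ?exy.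
have := @leq_bigmax_cond _ (independent e) (fun A : {set T} => #|A|) _ I.
by rewrite cards2 nxy.
Qed.

Lemma no_q3 s d (P : T -> 'I_s -> 'M[CC]_d) (i1 i2 i3 : 'I_s) :
  (forall v u w, u != v -> w != v -> u != w -> ~~ e v u -> ~~ e v w -> e w u) ->
  i1 != i2 -> i1 != i3 -> i2 != i3 -> (0 < d)%N -> ~ @quantum_coclique T e s d P.
Proof.
move=> tri n12 n13 n23 d0 [_ Hsum Hb Hc].
have P0 : forall v, P v i1 = 0.
  move=> v.
  pose N := fun u => (u != v) && ~~ e v u.
  have HQ : forall i, i != i1 -> (\sum_(u | N u) P u i) *m P v i1 = P v i1.
    move=> i ni.
    have Z : (\sum_(u | ~~ N u) P u i) *m P v i1 = 0.
      rewrite mulmx_suml big1 // => u; rewrite /N negb_and !negbK => /orP[/eqP->|Heu].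
        exact: Hc v i i1 ni.
      exact: Hb i i1 v u ni Heu.
    by rewrite -[RHS]mul1mx -(Hsum i) [in RHS](bigID N) mulmxDl Z addr0.
  have HQR : (\sum_(u | N u) P u i2) *m (\sum_(w | N w) P w i3) = 0.
    rewrite mulmx_suml big1 // => u /andP[uv eu]; rewrite mulmx_sumr big1 //.
    move=> w /andP[wv ew].
    case: (eqVneq u w) => [<-|uw]; first exact: Hc u i2 i3 n23.
    exact: Hb i2 i3 w u n23 (tri v u w uv wv uw eu ew).
  rewrite -(HQ i2); last by rewrite eq_sym.
  rewrite -(HQ i3); last by rewrite eq_sym.
  by rewrite mulmxA HQR mul0mx.
have := one_neq0 d0; rewrite -(Hsum i1) big1 ?eqxx //.
Qed.

End Aux.

Theorem mainTheorem7 (T : finType) (e : rel T) :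
  simple_graph e -> (2 <= #|T|)%N ->
  (alpha e = 2%N <-> alpha_q_eq e 2).
Proof.
move=> [sym irr] T2; split.
- move=> H2.
  have [A IA HA] : {A : {set T} | independent e A & alpha e = #|A|}.
    apply: eq_bigmax_cond; apply/card_gt0P; exists set0.
    by apply/forallP => x; rewrite inE.
  split=> //.
    by rewrite -H2 HA; apply: classical_set.
  move=> s Hs [d [d1 [P HP]]].
  have h0 : (0 < s)%N by apply: leq_trans Hs.
  have h1 : (1 < s)%N by apply: leq_trans Hs.
  apply: (@no_q3 _ _ _ _ P (Ordinal h0) (Ordinal h1) (Ordinal Hs) _ _ _ _ d1 HP) => //.
  move=> v u w uv wv uw evu evw; case ewu: (e w u) => //; exfalso.
  have vu : v != u by rewrite eq_sym.
  have vw : v != w by rewrite eq_sym.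
  have euw : ~~ e u w by rewrite sym ewu.
  by move: (big3 sym irr vu vw uw evu evw euw); rewrite H2.
- move=> [_ Hq Hno].
  apply/eqP; rewrite eqn_leq; apply/andP; split.
    apply/bigmax_leqP => A IA; rewrite leqNgt; apply/negP => HA.
    exact: (Hno _ HA (classical_set IA)).
  case: (boolP [exists x, exists y, (x != y) && ~~ e x y]).
    by case/existsP => x /existsP [y /andP [nxy exy]]; apply: (big2 sym irr nxy exy).
  rewrite negb_exists => /forallP Hall; exfalso.
  move: Hq => [d [d0 [P [_ Hsum Hb Hc]]]].
  pose j0 : 'I_2 := ord0; pose j1 : 'I_2 := Ordinal (isT : (1 < 2)%N).
  have n01 : j0 != j1 by [].
  have := one_neq0 d0.
  rewrite -[X in X != _](mul1mx (1%:M)) -{1}(Hsum j0) -(Hsum j1).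
  rewrite mulmx_suml big1 ?eqxx // => v _; rewrite mulmx_sumr big1 // => u _.
  case: (eqVneq u v) => [->|uv]; first exact: Hc v j0 j1 n01.
  apply: (Hb j0 j1 u v n01).
  move: (Hall u); rewrite negb_exists => /forallP /(_ v).
  by rewrite uv /= negbK.
Qed.
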